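(* Let $S$ be a graded reduced affine monoid and $\tilde S$ as in the context. If the defining congruence $\sim_S$ has a quadratic Gröbner system (with respect to some admissible total order), then the defining congruence $\sim_{\tilde S}$ also has a quadratic Gröbner system (with respect to some admissible total order).
   Context: A monoid is a commutative cancellative semigroup with identity; affine: finitely generated submonoid of a finitely generated free abelian group; reduced: only unit is the identity. $S$ is graded: $S=\bigsqcup_{d\in\mathbb{N}_0}S_d$, $S_dS_e\subseteq S_{d+e}$, $|s|=d$ for $s\in S_d$. $\tilde S=\{s[i]\mid s\in S,0\le i\le|s|\}$ with $s[i]t[j]=(st)[i+j]$. For a reduced affine monoid $T$ with atom set $\mathcal{A}(T)$, its defining congruence $\sim_T$ is the congruence on the free commutative monoid $\{x^{\alpha}\mid\alpha\in\mathbb{N}_0^{\mathcal{A}(T)}\}$ with $x^{\alpha}\sim_T x^{\gamma}$ iff $\prod t^{\alpha(t)}=\prod t^{\gamma(t)}$ in $T$. An admissible total order $\prec$ on a free commutative monoid satisfies $x\prec y\Rightarrow xz\prec yz$ and $1\prec x$ for $x\ne1$. A finite $\Lambda$ of pairs is a Gröbner system of a congruence $\sim$ if $x\sim y$ and $y\prec x$ for all $(x,y)\in\Lambda$, and every element not divisible by a first component of a pair of $\Lambda$ is $\prec$-minimal in its class. It is quadratic if $|\lambda|\le2$ and $|\mu|\le2$ for all $(x^{\lambda},x^{\mu})\in\Lambda$, where $|\lambda|=\sum\lambda(t)$. *)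

(* Defs.v *)
From HB Require Import structures.
From mathcomp Require Import all_boot all_order all_algebra.
From mathcomp Require Import finmap.
Set Implicit Arguments. Unset Strict Implicit. Unset Printing Implicit Defensive.
Import GRing.Theory Num.Theory.
Local Open Scope ring_scope.

(* Monoids are modelled as subsets T of an ambient abelian group V
   (written additively), containing 0 and closed under +.  *)

Definition affine_in (V : zmodType) (T : V -> Prop) : Prop :=
  exists gens : seq V, forall x : V,
    T x <-> exists c : 'I_(size gens) -> nat,
              x = \sum_(i < size gens) gens`_i *+ c i.

Definition reduced (V : zmodType) (T : V -> Prop) : Prop :=
  forall x y : V, T x -> T y -> x + y = 0 -> x = 0.

Definition is_atom (V : zmodType) (T : V -> Prop) (x : V) : Prop :=
  [/\ T x, x <> 0 &
      forall y z : V, T y -> T z -> x = y + z -> y = 0 \/ z = 0].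

Definition atom_set (V : zmodType) (T : V -> Prop) (A : {fset V}) : Prop :=
  forall x : V, x \in A <-> is_atom T x.

(* the free commutative monoid {x^alpha | alpha in N_0^A} *)
Definition expv (V : zmodType) (A : {fset V}) := {ffun A -> nat}.

Definition emul (V : zmodType) (A : {fset V}) (a b : expv A) : expv A :=
  [ffun t => (a t + b t)%N].

Definition eone (V : zmodType) (A : {fset V}) : expv A := [ffun _ => 0%N].

Definition edeg (V : zmodType) (A : {fset V}) (a : expv A) : nat :=
  (\sum_(t : A) a t)%N.

Definition evalA (V : zmodType) (A : {fset V}) (a : expv A) : V :=
  \sum_(t : A) (val t) *+ a t.

Definition defcong (V : zmodType) (A : {fset V}) (a b : expv A) : Prop :=
  evalA a = evalA b.

Definition admissible (V : zmodType) (A : {fset V}) (lt : expv A -> expv A -> Prop)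
  : Prop :=
  [/\ (forall x, ~ lt x x),
      (forall x y z, lt x y -> lt y z -> lt x z),
      (forall x y, x <> y -> lt x y \/ lt y x),
      (forall x y z, lt x y -> lt (emul x z) (emul y z)) &
      (forall x, x <> eone A -> lt (eone A) x)].

Definition divides (V : zmodType) (A : {fset V}) (x z : expv A) : Prop :=
  exists u, z = emul x u.

Definition groebner_system (V : zmodType) (A : {fset V})
  (rel lt : expv A -> expv A -> Prop) (L : seq (expv A * expv A)) : Prop :=
  (forall p, p \in L -> rel p.1 p.2 /\ lt p.2 p.1) /\
  (forall z, (forall p, p \in L -> ~ divides p.1 z) ->
     forall w, rel z w -> z = w \/ lt z w).

Definition quadratic (V : zmodType) (A : {fset V}) (L : seq (expv A * expv A))
  : Prop :=
  forall p, p \in L -> (edeg p.1 <= 2)%N /\ (edeg p.2 <= 2)%N.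

Definition has_quadratic_groebner (V : zmodType) (T : V -> Prop) : Prop :=
  exists A : {fset V}, atom_set T A /\
  exists lt : expv A -> expv A -> Prop, admissible lt /\
  exists L : seq (expv A * expv A),
    groebner_system (@defcong V A) lt L /\ quadratic L.

(* S~ = { s[i] | s in S, 0 <= i <= |s| }, realised as the pairs (s, i)
   inside Z^m x Z, so that s[i] t[j] = (st)[i+j] is addition. *)
Definition tilde (m : nat) (S : 'rV[int]_m -> Prop) (deg : 'rV[int]_m -> nat)
  : ('rV[int]_m * int)%type -> Prop :=
  fun p => S p.1 /\ (0 <= p.2 <= (deg p.1)%:Z).

(* Main.v *)
Require Import Defs.
From HB Require Import structures.
From mathcomp Require Import all_boot all_order all_algebra.
From mathcomp Require Import finmap zify.
From Stdlib Require Import Classical ClassicalEpsilon.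
Import Order.TTheory GRing.Theory Num.Theory.
Local Open Scope ring_scope.

Set Implicit Arguments. Unset Strict Implicit. Unset Printing Implicit Defensive.

Section Ffun.
Variables (W : zmodType) (B : {fset W}).
Implicit Types x y z : expv B.

Definition ev (t : B) : expv B := [ffun u => nat_of_bool (u == t)].

Lemma emulE x y t : emul x y t = (x t + y t)%N.
Proof. by rewrite ffunE. Qed.

Lemma eoneE t : eone B t = 0%N.
Proof. by rewrite ffunE. Qed.

Lemma emulC x y : emul x y = emul y x.
Proof. by apply/ffunP => t; rewrite !emulE addnC. Qed.

Lemma emulA x y z : emul x (emul y z) = emul (emul x y) z.
Proof. by apply/ffunP => t; rewrite !emulE addnA. Qed.

Lemma emul1 x : emul (eone B) x = x.
Proof. by apply/ffunP => t; rewrite !emulE eoneE. Qed.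

Lemma emulI x y y' : emul x y = emul x y' -> y = y'.
Proof.
move=> H; apply/ffunP => t; move/ffunP: H => /(_ t); rewrite !emulE.
by move/eqP; rewrite eqn_add2l => /eqP.
Qed.

Lemma edeg_emul x y : edeg (emul x y) = (edeg x + edeg y)%N.
Proof. by rewrite /edeg -big_split /=; apply: eq_bigr => t _; rewrite emulE. Qed.

Lemma edeg_eone : edeg (eone B) = 0%N.
Proof. by rewrite /edeg big1 // => t _; rewrite eoneE. Qed.

Lemma edeg_ev t : edeg (ev t) = 1%N.
Proof.
rewrite /edeg (bigD1 t) //= big1 ?ffunE ?eqxx // => u /negbTE Hu.
by rewrite ffunE Hu.
Qed.

Lemma edeg0 x : edeg x = 0%N -> x = eone B.
Proof.
move=> /eqP; rewrite /edeg sum_nat_eq0 => /forallP H.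
by apply/ffunP => t; rewrite eoneE; apply/eqP; exact: (implyP (H t)).
Qed.

Lemma le_edeg x t : (x t <= edeg x)%N.
Proof. by rewrite /edeg (bigD1 t) //= leq_addr. Qed.

Lemma edeg_split x : (0 < edeg x)%N -> exists t x', x = emul (ev t) x'.
Proof.
move=> H.
have : exists t, (0 < x t)%N.
  apply/existsP; move: H; apply: contraLR; rewrite negb_exists => /forallP Hn.
  rewrite -leqNgt leqn0 /edeg sum_nat_eq0; apply/forallP => t.
  by move: (Hn t); rewrite lt0n negbK.
move=> [t Ht]; exists t, [ffun u => (x u - (u == t))%N].
apply/ffunP => u; rewrite emulE !ffunE.
by case: (eqVneq u t) => [->|] /=; [rewrite subnKC|rewrite subn0].
Qed.

Lemma le_divides x z : (forall t, x t <= z t)%N -> divides x z.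
Proof.
move=> H; exists [ffun t => (z t - x t)%N]; apply/ffunP => t.
by rewrite emulE ffunE subnKC.
Qed.

Lemma divides_emul x y : divides x (emul x y).
Proof. by exists y. Qed.

End Ffun.

Section SBasics.
Variables (V : zmodType) (S : V -> Prop) (deg : V -> nat).
Hypothesis Saff : affine_in S.
Hypothesis degD : forall s t, S s -> S t -> deg (s + t) = (deg s + deg t)%N.

Lemma S0 : S 0.
Proof.
case: Saff => gens H; apply/H; exists (fun _ => 0%N).
by rewrite big1 // => i _; rewrite mulr0n.
Qed.

Lemma SD x y : S x -> S y -> S (x + y).
Proof.
case: Saff => gens H /H [c ->] /H [c' ->]; apply/H.
exists (fun i => (c i + c' i)%N); rewrite -big_split /=.
by apply: eq_bigr => i _; rewrite mulrnDr.
Qed.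

Lemma deg0 : deg 0 = 0%N.
Proof. have := degD S0 S0; rewrite addr0; lia. Qed.

Lemma S_sum (I : Type) (r : seq I) (P : pred I) (F : I -> V) :
  (forall i, P i -> S (F i)) ->
  S (\sum_(i <- r | P i) F i) /\
  deg (\sum_(i <- r | P i) F i) = (\sum_(i <- r | P i) deg (F i))%N.
Proof.
move=> HF; elim: r => [|i r [IH1 IH2]]; first by rewrite !big_nil deg0; split=> //; exact: S0.
rewrite !big_cons; case: ifP => // Pi.
by split; [apply: SD => //; exact: HF | rewrite degD // ?IH2 //; exact: HF].
Qed.

Lemma S_mulrn x n : S x -> S (x *+ n) /\ deg (x *+ n) = (n * deg x)%N.
Proof.
move=> Sx; elim: n => [|n [IH1 IH2]]; first by rewrite mulr0n deg0; split=> //; exact: S0.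
by rewrite mulrS; split; [exact: SD | rewrite degD // IH2 mulSn].
Qed.

End SBasics.

Lemma fst_mulrn (U W : zmodType) (x : U * W) n : (x *+ n).1 = x.1 *+ n.
Proof. by elim: n => [|n IH] //; rewrite !mulrS /= IH. Qed.
Lemma snd_mulrn (U W : zmodType) (x : U * W) n : (x *+ n).2 = x.2 *+ n.
Proof. by elim: n => [|n IH] //; rewrite !mulrS /= IH. Qed.
Lemma Posz_mulrn (a n : nat) : (Posz a) *+ n = Posz (a * n)%N.
Proof. by elim: n => [|n IH]; rewrite ?muln0 // mulrS IH mulnS. Qed.

Section Main.
Variable m : nat.
Local Notation V := 'rV[int]_m.
Variables (S : V -> Prop) (deg : V -> nat).
Hypothesis Saff : affine_in S.
Hypothesis degD : forall s t, S s -> S t -> deg (s + t) = (deg s + deg t)%N.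
Variable A : {fset V}.
Hypothesis HA : atom_set S A.

Definition sq : seq (V * int) :=
  [seq (s, (i%:Z)) | s <- enum_fset A, i <- iota 0 (deg s).+1].
Definition Atil : {fset (V * int)} := [fset x in sq]%fset.

Lemma memAtil x : (x \in Atil) = (x.1 \in A) && (0 <= x.2 <= (deg x.1)%:Z).
Proof.
rewrite /Atil inE /sq; apply/allpairsPdep/andP => [[s [i [Hs Hi ->]]]|[H1 H2]] /=.
  by rewrite mem_iota in Hi; split=> //; rewrite lez_nat; lia.
case: x H1 H2 => s i /= H1 /andP[H2 H3].
exists s, `|i|%N; split=> //.
  by rewrite -[_ :: _]/(iota 0 (deg s).+1) mem_iota; lia.
by congr (_,_); lia.
Qed.

Definition tat (t : Atil) : V := (val t).1.
Definition tid (t : Atil) : nat := `|(val t).2|%N.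

Lemma tatA t : tat t \in A.
Proof. by have := fsvalP t; rewrite memAtil => /andP[]. Qed.

Lemma tid_deg t : (tid t <= deg (tat t))%N.
Proof.
case: t => [[a i] H]; rewrite /tid /tat /=; move: H; rewrite memAtil /= => /andP[_ /andP[H1 H2]].
have H1' : (0 <= i)%R := H1; lia.
Qed.

Lemma valt t : val t = (tat t, (tid t)%:Z).
Proof.
case: t => [[a i] H]; rewrite /tid /tat /=; move: H; rewrite memAtil /= => /andP[_ /andP[H1 H2]].
have H1' : (0 <= i)%R := H1; congr (_,_); lia.
Qed.

Lemma t_inj t u : tat t = tat u -> tid t = tid u -> t = u.
Proof. by move=> H1 H2; apply: val_inj; rewrite !valt H1 H2. Qed.

Lemma mkt s i : s \in A -> (i <= deg s)%N -> exists t : Atil, tat t = s /\ tid t = i.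
Proof.
move=> Hs Hi; have H : (s, i%:Z) \in Atil by rewrite memAtil /= Hs /=; lia.
by exists [` H]%fset.
Qed.

Lemma mka s : s \in A -> exists a : A, val a = s.
Proof. by move=> Hs; exists [` Hs]%fset. Qed.

Definition pi (z : expv Atil) : expv A :=
  [ffun a : A => (\sum_(t : Atil | tat t == val a) z t)%N].

Lemma sum_pi (M : nmodType) (g : V -> M) (z : expv Atil) :
  \sum_(a : A) g (val a) *+ pi z a = \sum_(t : Atil) g (tat t) *+ z t.
Proof.
under eq_bigr => a _ do rewrite ffunE -sumrMnr.
rewrite (exchange_big_dep xpredT) //=; apply: eq_bigr => t _.
have [a0 Ha0] := mka (tatA t).
rewrite (big_pred1 a0) ?Ha0 // => a /=.
by rewrite -Ha0 eq_sym; apply/eqP/eqP => [/val_inj|->].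
Qed.

Lemma sum_pin (g : V -> nat) (z : expv Atil) :
  (\sum_(a : A) g (val a) * pi z a = \sum_(t : Atil) g (tat t) * z t)%N.
Proof.
under eq_bigr => a _ do rewrite ffunE big_distrr.
rewrite (exchange_big_dep xpredT) //=; apply: eq_bigr => t _.
have [a0 Ha0] := mka (tatA t).
rewrite (big_pred1 a0) ?Ha0 // => a /=.
by rewrite -Ha0 eq_sym; apply/eqP/eqP => [/val_inj|->].
Qed.

Lemma pi_emul x y : pi (emul x y) = emul (pi x) (pi y).
Proof. by apply/ffunP => a; rewrite !ffunE -big_split; apply: eq_bigr => t _; rewrite ffunE. Qed.

Lemma pi_eone : pi (eone Atil) = eone A.
Proof. by apply/ffunP => a; rewrite !ffunE big1 // => t _; rewrite ffunE. Qed.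

Lemma pi_ev t : pi (ev t) = [ffun a : A => nat_of_bool (tat t == val a)].
Proof.
apply/ffunP => a; rewrite !ffunE.
case: (boolP (tat t == val a)) => H.
  rewrite (bigD1 t) //= ffunE eqxx big1 // => u /andP[_ /negbTE Hu].
  by rewrite ffunE Hu.
by rewrite big1 // => u Hu; rewrite ffunE; case: eqP => // E; subst u; rewrite Hu in H.
Qed.

Lemma pi_evA t (a : A) : val a = tat t -> pi (ev t) = ev a.
Proof.
move=> Ha; rewrite pi_ev; apply/ffunP => b; rewrite !ffunE -Ha.
by congr nat_of_bool; apply/eqP/eqP => [/val_inj|->].
Qed.

Lemma edeg_pi z : edeg (pi z) = edeg z.
Proof.
have := sum_pin (fun _ => 1%N) z; rewrite /edeg.
by under eq_bigr do rewrite mul1n; under [X in _ = X -> _]eq_bigr do rewrite mul1n.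
Qed.

Definition mass (z : expv Atil) : nat := (\sum_(t : Atil) tid t * z t)%N.

Lemma mass_emul x y : mass (emul x y) = (mass x + mass y)%N.
Proof. by rewrite /mass -big_split; apply: eq_bigr => t _; rewrite ffunE mulnDr. Qed.

Lemma mass_ev t : mass (ev t) = tid t.
Proof.
rewrite /mass (bigD1 t) //= ffunE eqxx big1 ?muln1 ?addn0 // => u /negbTE Hu.
by rewrite ffunE Hu muln0.
Qed.

Lemma mass_eone : mass (eone Atil) = 0%N.
Proof. by rewrite /mass big1 // => t _; rewrite ffunE muln0. Qed.

Lemma evalA_til z : evalA z = (evalA (pi z), (mass z)%:Z).
Proof.
rewrite /evalA; apply: injective_projections => /=.
  rewrite (big_morph fst (id1 := 0) (op1 := +%R)) //=.
  rewrite (sum_pi id); apply: eq_bigr => t _; by rewrite fst_mulrn.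
rewrite (big_morph snd (id1 := 0) (op1 := +%R)) //=.
rewrite /mass (big_morph Posz (id1 := 0) (op1 := +%R)) //.
by apply: eq_bigr => t _; rewrite snd_mulrn valt /= Posz_mulrn.
Qed.


Definition rk (s : V) : nat := index s (enum_fset A).
Definition Bk : nat := (\max_(t : Atil) tid t).+1.
Definition key (t : Atil) : nat := (rk (tat t) * Bk + (Bk - 1 - tid t))%N.

Lemma tid_lt t : (tid t < Bk)%N.
Proof. by rewrite /Bk ltnS; exact: (@leq_bigmax _ tid t). Qed.

Lemma arith_key x y i j B : (i < B)%N -> (j < B)%N ->
  (x * B + (B - 1 - i) < y * B + (B - 1 - j))%N = (x < y)%N || ((x == y) && (j < i)%N).
Proof.
move=> Hi Hj; case: (ltngtP x y) => H /=.
- have := leq_mul H (leqnn B); rewrite mulSn => H'; apply/idP; lia.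
- have := leq_mul H (leqnn B); rewrite mulSn => H'; apply/negbTE; lia.
- subst y; apply/idP/idP; lia.
Qed.

Lemma rk_eq u v : (rk (tat u) == rk (tat v)) = (tat u == tat v).
Proof.
apply/eqP/eqP => [H|->] //; apply: (index_inj (tat u)) H; exact: tatA.
Qed.

Definition bef (a : V) (i : nat) (u : Atil) : bool :=
  (rk a < rk (tat u))%N || ((a == tat u) && (tid u < i)%N).

Lemma keyE u v : (key u < key v)%N = bef (tat u) (tid u) v.
Proof. by rewrite /key arith_key ?tid_lt // rk_eq. Qed.

Lemma key_inj u v : key u = key v -> u = v.
Proof.
move=> H; have H1 := keyE u v; have H2 := keyE v u.
rewrite H ltnn /bef in H1 H2.
move: H1 H2; case: (ltngtP (rk (tat u)) (rk (tat v))) => //= /eqP; rewrite rk_eq => /eqP E.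
rewrite E eqxx /= => /esym/negbT; rewrite -leqNgt => Hb /esym/negbT; rewrite -leqNgt => Ha.
by apply: t_inj => //; apply/eqP; rewrite eqn_leq Ha Hb.
Qed.

Lemma key_neq u v : u != v -> (key u != key v).
Proof. by apply: contraNN => /eqP /key_inj ->. Qed.

Lemma improve (z w : expv Atil) v : pi z = pi w -> mass z = mass w ->
  (forall u, (key u < key v)%N -> z u = w u) -> (z v < w v)%N ->
  exists t u, [/\ (0 < z t)%N, (1 + (t == u) <= z u)%N, (tid t < deg (tat t))%N,
                  (0 < tid u)%N & bef (tat t) (tid t).+1 u].
Proof.
move=> Hpi Hm Hlow Hv.
have Hkv := tid_deg v.
have [t1 [Ht1a Ht1k Ht1z]] : exists t, [/\ tat t = tat v, (tid t < tid v)%N & (0 < z t)%N].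
  apply: NNPP => Hn.
  have [a0 Ha0] := mka (tatA v).
  have := congr1 (fun f : expv A => f a0) Hpi; rewrite !ffunE.
  rewrite (bigID (fun t => key t < key v)%N) [X in _ = X](bigID (fun t => key t < key v)%N) /=.
  rewrite (eq_bigr (fun t => w t)); last by move=> t /andP[_ H]; exact: Hlow.
  move/eqP; rewrite eqn_add2l => /eqP.
  rewrite (bigD1 v) /=; last by rewrite Ha0 eqxx ltnn.
  rewrite [X in _ = X](bigD1 v) /=; last by rewrite Ha0 eqxx ltnn.
  rewrite big1 ?addn0; first by lia.
  move=> t /andP[/andP[/eqP Ht Hk] Htv].
  have Hkt : (key v < key t)%N by rewrite ltn_neqAle eq_sym key_neq // leqNgt.
  rewrite keyE /bef -Ha0 Ht ltnn eqxx /= in Hkt.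
  apply/eqP; rewrite -leqn0 leqNgt; apply/negP => Hz; apply: Hn; exists t; split => //.
  by rewrite Ht Ha0.
pose P := fun t => [&& tat t == tat v, (tid t < tid v)%N & (0 < z t)%N].
have P1 : P t1 by rewrite /P Ht1a eqxx Ht1k Ht1z.
case: (@arg_maxnP _ t1 P tid P1) => t0 /and3P[/eqP Ht0a Ht0k Ht0z] Hmax.
set p := tid t0 in Ht0k Hmax *.
apply: NNPP => Hno.
have Hq : forall u, bef (tat v) p.+1 u -> (0 < tid u)%N -> (z u <= (t0 == u))%N.
  move=> u Hb Hu; rewrite leqNgt; apply/negP => Hlt; apply: Hno; exists t0, u; split => //.
  - by rewrite Ht0a; exact: leq_trans Ht0k Hkv.
  - by rewrite Ht0a.
have Ht0v : (t0 == v) = false by apply/negbTE/eqP => E; move: Ht0k; rewrite /p E ltnn.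
have Hz : (mass z <= \sum_(t | (key t < key v)%N) tid t * z t + (tid v * z v + p))%N.
  rewrite /mass (bigID (fun t => key t < key v)%N) /= leq_add2l.
  apply: (@leq_trans (\sum_(t | ~~ (key t < key v)%N)
            ((t == v) * (tid v * z v) + (t == t0) * p))%N).
    apply: leq_sum => t Ht; case: (eqVneq t v) => [->|Htv].
      by rewrite eq_sym Ht0v mul1n mul0n addn0.
    have Hkt : (key v < key t)%N by rewrite ltn_neqAle eq_sym key_neq // leqNgt.
    rewrite keyE /bef in Hkt; rewrite mul0n add0n.
    case Hb: (bef (tat v) p.+1 t).
      case: (posnP (tid t)) => [->|Hpos]; first by rewrite mul0n.
      have := Hq t Hb Hpos; case: (eqVneq t0 t) => [<-|Hne] Hzt.
        by move: Hzt; rewrite ?eqxx /= => Hzt; rewrite mul1n /p; nia.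
      by move: Hzt; rewrite leqn0 => /eqP ->; rewrite muln0.
    move: Hb; rewrite /bef; case: (ltnP (rk (tat v)) (rk (tat t))) => Hr /=.
      by [].
    rewrite ltnNge Hr /= in Hkt; case/andP: Hkt => /eqP Er Hlt.
    have Ea : tat v = tat t by apply/eqP; rewrite -rk_eq Er.
    rewrite Ea eqxx /= => /negbT; rewrite -leqNgt => Hpt.
    case: (posnP (z t)) => [->|Hzt]; first by rewrite muln0.
    have := Hmax t; rewrite /P Ea eqxx Hlt Hzt /= => /(_ isT); lia.
  rewrite [X in (_ <= X)%N](_ : _ = \sum_t ((t == v) * (tid v * z v) + (t == t0) * p))%N.
    by rewrite [X in (_ <= X)%N](bigID (fun t => key t < key v)%N) /= leq_addl.
  rewrite big_split /= (bigD1 v) //= big1 => [|t /negbTE ->]; rewrite ?eqxx ?mul1n ?addn0 //.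
  rewrite (bigD1 t0) //= big1 => [|t /negbTE ->]; rewrite ?eqxx ?mul1n ?addn0 //.
have Hw : (\sum_(t | (key t < key v)%N) tid t * w t + tid v * w v <= mass w)%N.
  rewrite /mass [X in (_ <= X)%N](bigID (fun t => key t < key v)%N) /= leq_add2l (bigD1 v) /= ?ltnn //.
  exact: leq_addr.
have Hlow' : (\sum_(t | (key t < key v)%N) tid t * z t = \sum_(t | (key t < key v)%N) tid t * w t)%N.
  by apply: eq_bigr => t Ht; rewrite Hlow.
have Hmul : (tid v * z v + tid v <= tid v * w v)%N.
  by rewrite -[X in (X <= _)%N]mulnSr; apply: leq_mul.
lia.
Qed.


Lemma SA (a : A) : S (val a).
Proof. by have [H _] := HA (val a); case: (H (fsvalP a)). Qed.

Lemma lift (x x' : expv A) (z : expv Atil) : pi z = emul x x' ->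
  exists y y', [/\ z = emul y y', pi y = x & pi y' = x'].
Proof.
move: {2}(edeg x) (erefl (edeg x)) => n; elim: n x x' z => [|n IH] x x' z Hn Hz.
  move/edeg0: Hn => Hx; exists (eone Atil), z; rewrite emul1 pi_eone Hz Hx emul1; split => //.
have [a [x1 Hx1]] : exists a x1, x = emul (ev a) x1 by apply: edeg_split; rewrite Hn.
have Hn1 : edeg x1 = n by move: Hn; rewrite Hx1 edeg_emul edeg_ev add1n => [[]].
have [t [Hta Hzt]] : exists t, tat t == val a /\ (0 < z t)%N.
  have : (0 < pi z a)%N by rewrite Hz Hx1 !emulE ffunE eqxx.
  rewrite ffunE lt0n sum_nat_eq0 => /forallPn [t]; rewrite negb_imply -lt0n => /andP[H1 H2].
  by exists t.
pose z1 := [ffun u => (z u - (u == t))%N].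
have Ez : z = emul (ev t) z1.
  apply/ffunP => u; rewrite emulE !ffunE.
  by case: (eqVneq u t) => [->|] /=; [rewrite subnKC|rewrite subn0].
have Hpz1 : pi z1 = emul x1 x'.
  apply: (@emulI _ _ (ev a)); rewrite emulA -Hx1 -Hz Ez pi_emul (pi_evA (a := a)) //.
  by apply/eqP; rewrite eq_sym.
have [y1 [y' [E1 E2 E3]]] := IH x1 x' z1 Hn1 Hpz1.
exists (emul (ev t) y1), y'; split => //.
- by rewrite Ez E1 emulA.
- by rewrite pi_emul E2 Hx1 (pi_evA (a := a)) //; apply/eqP; rewrite eq_sym.
Qed.

Definition cap (x : expv A) : nat := (\sum_(a : A) deg (val a) * x a)%N.

Lemma cap_emul x y : cap (emul x y) = (cap x + cap y)%N.
Proof. by rewrite /cap -big_split; apply: eq_bigr => a _; rewrite ffunE mulnDr. Qed.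

Lemma cap_ev a : cap (ev a) = deg (val a).
Proof.
rewrite /cap (bigD1 a) //= ffunE eqxx big1 ?muln1 ?addn0 // => b /negbTE Hb.
by rewrite ffunE Hb muln0.
Qed.

Lemma cap_eone : cap (eone A) = 0%N.
Proof. by rewrite /cap big1 // => a _; rewrite ffunE muln0. Qed.

Lemma distr (x : expv A) I : (I <= cap x)%N -> exists y, pi y = x /\ mass y = I.
Proof.
move: {2}(edeg x) (erefl (edeg x)) => n; elim: n x I => [|n IH] x I Hn HI.
  move/edeg0: Hn => Hx; subst x; rewrite cap_eone leqn0 in HI.
  by exists (eone Atil); rewrite pi_eone mass_eone (eqP HI).
have [a [x1 Hx1]] : exists a x1, x = emul (ev a) x1 by apply: edeg_split; rewrite Hn.
have Hn1 : edeg x1 = n by move: Hn; rewrite Hx1 edeg_emul edeg_ev add1n => [[]].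
rewrite Hx1 cap_emul cap_ev in HI.
have [t [Hta Hti]] := mkt (fsvalP a) (geq_minr I (deg (val a))).
have [y1 [E1 E2]] := IH x1 (I - minn I (deg (val a)))%N Hn1 ltac:(lia).
exists (emul (ev t) y1); split.
  by rewrite pi_emul E1 Hx1 (pi_evA (a := a)).
by rewrite mass_emul mass_ev E2 Hti; lia.
Qed.

Lemma mass_cap y : (mass y <= cap (pi y))%N.
Proof.
rewrite /cap (sum_pin deg) /mass; apply: leq_sum => t _.
by apply: leq_mul => //; exact: tid_deg.
Qed.

Lemma cap_deg x : cap x = deg (evalA x).
Proof.
have [_ ->] := S_sum Saff degD (index_enum A) (P := xpredT) (F := fun a : A => val a *+ x a)
  (fun a _ => (S_mulrn Saff degD (x a) (SA a)).1).
rewrite /cap; apply: eq_bigr => a _.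
by rewrite (S_mulrn Saff degD (x a) (SA a)).2 mulnC.
Qed.


Section Order.
Variable ltS : expv A -> expv A -> Prop.
Hypothesis admS : admissible ltS.

Definition ltL (z w : expv Atil) : Prop :=
  exists v, (forall u, (key u < key v)%N -> z u = w u) /\ (w v < z v)%N.

Definition ltT (z w : expv Atil) : Prop :=
  ltS (pi z) (pi w) \/ (pi z = pi w /\ ltL z w).

Lemma ltL_irr z : ~ ltL z z.
Proof. by case=> v [_]; rewrite ltnn. Qed.

Lemma ltL_trans x y z : ltL x y -> ltL y z -> ltL x z.
Proof.
case=> v1 [H1 L1] [v2 [H2 L2]].
case: (ltngtP (key v1) (key v2)) => Hk.
- exists v1; split; last by rewrite -H2.
  by move=> u Hu; rewrite H1 // H2 //; apply: ltn_trans Hk.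
- exists v2; split; last by rewrite H1.
  by move=> u Hu; rewrite H1 ?H2 //; apply: ltn_trans Hk.
- have E := key_inj Hk; subst v2; exists v1; split; last by apply: ltn_trans L2 L1.
  by move=> u Hu; rewrite H1 // H2.
Qed.

Lemma ltL_total z w : z <> w -> ltL z w \/ ltL w z.
Proof.
move=> Hne.
have [t0 Ht0] : exists t, z t != w t.
  apply: NNPP => H; apply: Hne; apply/ffunP => t; apply/eqP; apply: NNPP => H'.
  by apply: H; exists t; apply/negP.
case: (@arg_minnP _ t0 (fun t => z t != w t) key Ht0) => v Hv Hmin.
have Hlow : forall u, (key u < key v)%N -> z u = w u.
  move=> u Hu; apply/eqP; apply: contraTT Hu => Hne'; rewrite -leqNgt; exact: Hmin.
case: (ltngtP (z v) (w v)) => H.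
- by right; exists v; split => // u Hu; rewrite Hlow.
- by left; exists v.
- by rewrite H eqxx in Hv.
Qed.

Lemma ltL_mul x y z : ltL x y -> ltL (emul x z) (emul y z).
Proof.
case=> v [H1 L1]; exists v; split; first by move=> u Hu; rewrite !emulE H1.
by rewrite !emulE ltn_add2r.
Qed.

Lemma admT : admissible ltT.
Proof.
case: admS => Sirr Strans Stot Smul Sone.
split.
- by move=> x [H|[_ H]]; [exact: Sirr H | exact: ltL_irr H].
- move=> x y z [H|[E H]] [H'|[E' H']].
  + by left; apply: Strans H H'.
  + by left; rewrite -E'.
  + by left; rewrite E.
  + by right; split; [rewrite E | exact: ltL_trans H H'].
- move=> x y Hne; case: (classic (pi x = pi y)) => E.
    by case: (ltL_total Hne) => H; [left|right]; right.
  by case: (Stot _ _ E) => H; [left|right]; left.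
- move=> x y z [H|[E H]].
    by left; rewrite !pi_emul; apply: Smul.
  by right; split; [rewrite !pi_emul E | exact: ltL_mul].
- move=> x Hx; left; rewrite pi_eone; apply: Sone => E.
  by apply: Hx; apply: edeg0; rewrite -edeg_pi E edeg_eone.
Qed.

Definition bad (d : expv Atil) : Prop :=
  (edeg d <= 2)%N /\ exists d', [/\ (edeg d' <= 2)%N, defcong d d' & ltT d' d].

Variable L : seq (expv A * expv A).
Hypothesis GL : groebner_system (@defcong V A) ltS L.
Hypothesis QL : quadratic L.

Lemma caseS z w : defcong z w -> ltS (pi w) (pi z) -> exists d, divides d z /\ bad d.
Proof.
move=> Hc Hlt.
case: admS => Sirr Strans _ _ _.
have Hc' : defcong (pi z) (pi w).
  by move: Hc; rewrite /defcong !evalA_til => [[]].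
have [p [Hp Hdiv]] : exists p, p \in L /\ divides p.1 (pi z).
  apply: NNPP => Hn; case: GL => _ HG.
  have := HG (pi z) _ (pi w) Hc'; case.
  - by move=> p Hp Hd; apply: Hn; exists p.
  - by move=> E; rewrite E in Hlt; exact: Sirr Hlt.
  - by move=> H; exact: Sirr (Strans _ _ _ H Hlt).
case: GL => HL _; have [Hrel Hlt2] := HL p Hp; have [Q1 Q2] := QL Hp.
case: Hdiv => u Hu; have [d [y [Hz Hd Hy]]] := lift Hu.
have Hcap : (mass d <= cap p.2)%N.
  by rewrite cap_deg -Hrel -cap_deg -Hd; exact: mass_cap.
have [d' [Hd' Hm']] := distr Hcap.
exists d; split; first by rewrite Hz; exists y.
split; first by rewrite -edeg_pi Hd.
exists d'; split.
- by rewrite -edeg_pi Hd'.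
- by rewrite /defcong !evalA_til Hd Hd' Hm' Hrel.
- by left; rewrite Hd Hd'.
Qed.

Lemma key_ne x y : (key x < key y)%N -> (x == y) = false.
Proof. by move=> H; apply/negbTE; apply: contraTneq H => ->; rewrite ltnn. Qed.

Lemma caseL z w : defcong z w -> pi w = pi z -> ltL w z -> exists d, divides d z /\ bad d.
Proof.
move=> Hc Hpi [v [Hlow Hv]].
move: Hc; rewrite /defcong !evalA_til => [[_ Hm]].
have [t0 [u [H1 H2 H3 H4 H5]]] :=
  improve (esym Hpi) Hm (fun u Hu => esym (Hlow u Hu)) Hv.
have [t1 [Ht1a Ht1i]] := mkt (tatA t0) H3.
have [u1 [Hu1a Hu1i]] := mkt (tatA u) (leq_trans (leq_pred (tid u)) (tid_deg u)).
have K1 : (key t1 < key t0)%N by rewrite keyE /bef Ht1a Ht1i eqxx ltnSn orbT.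
have K2 : (key t1 < key u)%N by rewrite keyE Ht1a Ht1i.
have K3 : (key u < key u1)%N by rewrite keyE /bef Hu1a Hu1i eqxx /=; apply/orP; right; lia.
have Hpe : pi (emul (ev t1) (ev u1)) = pi (emul (ev t0) (ev u)).
  by rewrite !pi_emul !pi_ev Ht1a Hu1a.
exists (emul (ev t0) (ev u)); split.
  apply: le_divides => x; rewrite emulE !ffunE.
  case: (eqVneq x t0) => [->|Hx0] /=.
    by case: (eqVneq t0 u) H2 => [<-|_] /= H2 //; rewrite addn0.
  by case: (eqVneq x u) H2 => [->|_] //= H2; lia.
split; first by rewrite edeg_emul !edeg_ev.
exists (emul (ev t1) (ev u1)); split.
- by rewrite edeg_emul !edeg_ev.
- rewrite /defcong !evalA_til Hpe !mass_emul !mass_ev Ht1i Hu1i; congr (_, Posz _); lia.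
- right; split => //; exists t1; split.
    move=> x Hx; rewrite !emulE !ffunE.
    rewrite (key_ne Hx) (key_ne (ltn_trans Hx K1)) (key_ne (ltn_trans Hx K2)).
    by rewrite (key_ne (ltn_trans Hx (ltn_trans K2 K3))).
  by rewrite !emulE !ffunE eqxx (key_ne K1) (key_ne K2).
Qed.


Definition D2 : seq (expv Atil) :=
  map (fun f : {ffun Atil -> 'I_3} => [ffun t => nat_of_ord (f t)]) (enum {: {ffun Atil -> 'I_3}}).

Lemma memD2 d : (edeg d <= 2)%N -> d \in D2.
Proof.
move=> Hd; apply/mapP; exists [ffun t => inord (d t) : 'I_3]; first by rewrite mem_enum.
apply/ffunP => t; rewrite !ffunE inordK // ltnS; exact: leq_trans (le_edeg d t) Hd.
Qed.

Definition badb (d : expv Atil) : bool :=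
  if excluded_middle_informative (bad d) then true else false.

Lemma badbP d : badb d = true <-> bad d.
Proof. by rewrite /badb; case: excluded_middle_informative. Qed.

Definition witP (d d' : expv Atil) : Prop := [/\ (edeg d' <= 2)%N, defcong d d' & ltT d' d].

Definition wit (d : expv Atil) : expv Atil := epsilon (inhabits d) (witP d).

Lemma witS d : bad d -> witP d (wit d).
Proof. by case=> _ H; apply: epsilon_spec. Qed.

Definition Ltil : seq (expv Atil * expv Atil) := [seq (d, wit d) | d <- D2 & badb d].

Lemma memLtil p : p \in Ltil -> bad p.1 /\ p.2 = wit p.1.
Proof.
by case/mapP => d; rewrite mem_filter => /andP[/badbP Hb _] ->.
Qed.

Lemma groebT : groebner_system (@defcong _ Atil) ltT Ltil.
Proof.
split.
  move=> p /memLtil [Hb ->]; have [_ H1 H2] := witS Hb; split => //.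
move=> z Hz w Hc.
case: (classic (z = w)) => [E|Hne]; first by left.
case: (admT) => _ _ Htot _ _.
case: (Htot _ _ Hne) => [H|H]; first by right.
have [d [Hdiv Hb]] : exists d, divides d z /\ bad d.
  case: H => [H|[E H]].
    by apply: (caseS (w := w)) => //; rewrite /defcong -Hc.
  by apply: (caseL (w := w)) => //; rewrite /defcong -Hc.
exfalso; apply: (Hz (d, wit d)) => //.
apply/mapP; exists d => //; rewrite mem_filter memD2 ?andbT; last by case: Hb.
by apply/badbP.
Qed.

Lemma quadT : quadratic Ltil.
Proof.
move=> p /memLtil [Hb ->]; split; first by case: Hb.
by have [] := witS Hb.
Qed.

End Order.

Lemma atomT : atom_set (tilde S deg) Atil.
Proof.
have deg0' := deg0 Saff degD.
move=> x; rewrite memAtil; split.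
  case/andP => HxA /andP[H1 H2].
  have [Hat Hnz Hsplit] := (HA x.1).1 HxA.
  split.
  - by split => //; rewrite H1 H2.
  - by move=> E; apply: Hnz; rewrite E.
  - move=> y z [Sy /andP[Hy1 Hy2]] [Sz /andP[Hz1 Hz2]] E.
    have E1 : x.1 = y.1 + z.1 by rewrite E.
    case: (Hsplit _ _ Sy Sz E1) => E0; [left|right].
    + rewrite E0 deg0' in Hy2; apply: injective_projections => /=; first exact: E0.
      by apply/Order.POrderTheory.le_anti/andP; split.
    + rewrite E0 deg0' in Hz2; apply: injective_projections => /=; first exact: E0.
      by apply/Order.POrderTheory.le_anti/andP; split.
case=> [[Sx /andP[H1 H2]] Hnz Hsplit].
have Hx1 : x.1 <> 0.
  move=> E; apply: Hnz; apply: injective_projections => /=; first exact: E.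
  by rewrite E deg0' in H2; apply/Order.POrderTheory.le_anti/andP; split.
apply/andP; split; last by rewrite H1 H2.
apply/(HA x.1).2; split => // y z Sy Sz E.
have Hdy : deg x.1 = (deg y + deg z)%N by rewrite E degD.
have H2' : x.2 <= (deg y)%:Z + (deg z)%:Z by rewrite -PoszD -Hdy.
case: (lerP x.2 (deg y)%:Z) => Hle.
  have := Hsplit (y, x.2) (z, 0); case.
  - by split => //; rewrite H1 Hle.
  - by split => //; rewrite lexx.
  - by apply: injective_projections => /=; rewrite ?addr0.
  - by move=> /(congr1 fst) /= ->; left.
  - by move=> /(congr1 fst) /= ->; right.
have := Hsplit (y, (deg y)%:Z) (z, x.2 - (deg y)%:Z); case.
- by split => //; rewrite lexx andbT.
- split => //; apply/andP; split; first by rewrite subr_ge0 ltW.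
  by rewrite lerBlDl.
- by apply: injective_projections => /=; rewrite // addrC subrK.
- by move=> /(congr1 fst) /= ->; left.
- by move=> /(congr1 fst) /= ->; right.
Qed.

End Main.

Theorem corollary5p5 (m : nat) (S : 'rV[int]_m -> Prop) (deg : 'rV[int]_m -> nat) :
  affine_in S -> reduced S ->
  (forall s t, S s -> S t -> deg (s + t) = (deg s + deg t)%N) ->
  has_quadratic_groebner S ->
  has_quadratic_groebner (tilde S deg).
Proof.
move=> Saff _ degD [A [HA [ltS [admS [L [GL QL]]]]]].
exists (Atil deg A); split; first exact: atomT.
exists (ltT (deg := deg) ltS); split; first exact: admT.
exists (Ltil deg ltS); split.
  exact: (groebT Saff degD HA admS GL QL).
exact: quadT.
Qed.
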